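(* Let $\mathcal F=\{F_x : x\in V(G)\}$ be a representation of a connected triangle-free restricted frame graph $G$ with no full star-cutset. Then the big vertices of $\mathcal F$ form a clique of $G$; in particular, there are at most two big vertices.
   Context: $N[v]=\{v\}\cup N(v)$. A full star-cutset of a connected graph $G$ is a set $N[u]$ whose removal disconnects $G$. A frame is the boundary of an axis-parallel box in $\mathbb R^2$. A representation of $G$ as a restricted frame graph is a family of frames $\{F_x\}$ with $xy\in E(G)$ iff $F_x\cap F_y\neq\emptyset$, satisfying: (1) corners of a frame do not coincide with any point of another frame; (2) the left side of any frame meets no other frame; (3) if the right side of a frame meets a second frame, it meets both the top and the bottom side of that frame; (4) if two frames intersect, no frame is entirely contained in the intersection of the regions bounded by them. A frame $F_1$ contains $F_2$ if they are disjoint and $F_2$ lies in the region bounded by $F_1$. For an induced cycle $C$ of $G$, a vertex $v\in V(C)$ is a big vertex of $C$ (with respect to $\mathcal F$) if $F_v$ contains the frame of every vertex of $V(C)\setminus N[v]$; the big vertices of $\mathcal F$ are the vertices that are big vertices of some induced cycle of $G$. *)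

(* Defs.v *)
From HB Require Import structures.
From mathcomp Require Import all_boot all_order all_algebra.
From mathcomp Require Import reals.
Set Implicit Arguments. Unset Strict Implicit. Unset Printing Implicit Defensive.
Import Order.TTheory GRing.Theory Num.Theory.
Local Open Scope ring_scope.

(* A frame is the boundary of the axis-parallel box [fl,fr] x [fb,ft];
   nondegeneracy (fl < fr, fb < ft) is required in [frame_ok]. *)
Record frame (R : realType) := Frame { fl : R; fr : R; fb : R; ft : R }.

Section Frames.
Variable R : realType.
Implicit Types (f : frame R) (p : R * R).

Definition frame_ok f : bool := (fl f < fr f) && (fb f < ft f).

Definition left_side f p : bool := (p.1 == fl f) && (fb f <= p.2 <= ft f).
Definition right_side f p : bool := (p.1 == fr f) && (fb f <= p.2 <= ft f).
Definition bottom_side f p : bool := (p.2 == fb f) && (fl f <= p.1 <= fr f).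
Definition top_side f p : bool := (p.2 == ft f) && (fl f <= p.1 <= fr f).

Definition on_frame f p : bool :=
  [|| left_side f p, right_side f p, bottom_side f p | top_side f p].

Definition in_region f p : bool := (fl f <= p.1 <= fr f) && (fb f <= p.2 <= ft f).

Definition is_corner f p : bool :=
  ((p.1 == fl f) || (p.1 == fr f)) && ((p.2 == fb f) || (p.2 == ft f)).

Definition meets (A B : R * R -> bool) : Prop := exists p, A p && B p.

Definition frame_contains (f1 f2 : frame R) : Prop :=
  ~ meets (on_frame f1) (on_frame f2) /\
  (forall p, on_frame f2 p -> in_region f1 p).
End Frames.

Definition closed_nbhd (T : finType) (e : rel T) (u : T) : pred T :=
  [pred v | (v == u) || e u v].

Definition connected_graph (T : finType) (e : rel T) : Prop :=
  forall x y : T, connect e x y.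

Definition triangle_free (T : finType) (e : rel T) : Prop :=
  forall x y z : T, e x y -> e y z -> e x z -> False.

Definition remove_nbhd_rel (T : finType) (e : rel T) (u : T) : rel T :=
  [rel a b | [&& e a b, a \notin closed_nbhd e u & b \notin closed_nbhd e u]].

Definition full_star_cutset (T : finType) (e : rel T) (u : T) : Prop :=
  exists x y : T, [/\ x \notin closed_nbhd e u, y \notin closed_nbhd e u &
                      ~~ connect (remove_nbhd_rel e u) x y].

(* induced cycle given by a cyclic sequence s of distinct vertices (length >= 3):
   two vertices of s are adjacent iff they are cyclically consecutive in s *)
Definition induced_cycle (T : finType) (e : rel T) (s : seq T) : Prop :=
  [/\ uniq s, (3 <= size s)%N &
      {in s &, forall x y, e x y = (y == next s x) || (x == next s y)}].

Definition restricted_rep (R : realType) (T : finType) (e : rel T)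
    (F : T -> frame R) : Prop :=
  (forall x, frame_ok (F x)) /\
  (forall x y, e x y <-> (x != y /\ meets (on_frame (F x)) (on_frame (F y)))) /\
  [/\
      (forall x y p, x != y -> is_corner (F x) p -> ~~ on_frame (F y) p),
      forall x y, x != y -> ~ meets (left_side (F x)) (on_frame (F y)),
      (forall x y, x != y -> meets (right_side (F x)) (on_frame (F y)) ->
          meets (right_side (F x)) (top_side (F y)) /\
          meets (right_side (F x)) (bottom_side (F y)))
    &
      forall x y z, x != y -> meets (on_frame (F x)) (on_frame (F y)) ->
          ~ (forall p, on_frame (F z) p -> in_region (F x) p && in_region (F y) p)].

Definition big_vertex_of_cycle (R : realType) (T : finType) (e : rel T)
    (F : T -> frame R) (s : seq T) (v : T) : Prop :=
  v \in s /\ forall w, w \in s -> w \notin closed_nbhd e v -> frame_contains (F v) (F w).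

Definition big_vertex (R : realType) (T : finType) (e : rel T)
    (F : T -> frame R) (v : T) : Prop :=
  exists s, induced_cycle e s /\ big_vertex_of_cycle e F s v.

(* Main.v *)
Require Import Defs.
From HB Require Import structures.
From mathcomp Require Import all_boot all_order all_algebra.
From mathcomp Require Import reals.
From mathcomp Require Import lra.
Set Implicit Arguments. Unset Strict Implicit. Unset Printing Implicit Defensive.
Import Order.TTheory GRing.Theory Num.Theory.
Local Open Scope ring_scope.

Section Geo.
Variable R : realType.
Implicit Types (f : frame R).

Lemma onL f x y : x = fl f -> fb f <= y -> y <= ft f -> on_frame f (x, y).
Proof. by move=> -> h1 h2; rewrite /on_frame /left_side /= eqxx h1 h2. Qed.
Lemma onR f x y : x = fr f -> fb f <= y -> y <= ft f -> on_frame f (x, y).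
Proof. by move=> -> h1 h2; rewrite /on_frame /right_side /= eqxx h1 h2 !orbT. Qed.
Lemma onB f x y : y = fb f -> fl f <= x -> x <= fr f -> on_frame f (x, y).
Proof. by move=> -> h1 h2; rewrite /on_frame /bottom_side /= eqxx h1 h2 !orbT. Qed.
Lemma onT f x y : y = ft f -> fl f <= x -> x <= fr f -> on_frame f (x, y).
Proof. by move=> -> h1 h2; rewrite /on_frame /top_side /= eqxx h1 h2 !orbT. Qed.

Lemma on_frameP f x y : on_frame f (x, y) ->
  [\/ [/\ x = fl f, fb f <= y & y <= ft f], [/\ x = fr f, fb f <= y & y <= ft f],
      [/\ y = fb f, fl f <= x & x <= fr f] | [/\ y = ft f, fl f <= x & x <= fr f]].
Proof.
rewrite /on_frame /left_side /right_side /bottom_side /top_side /=.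
case/or4P => /andP[/eqP -> /andP[h1 h2]].
- by apply: Or41.
- by apply: Or42.
- by apply: Or43.
- by apply: Or44.
Qed.

Ltac W H X Y l1 l2 := apply: H; exists (X, Y); apply/andP; split;
  [apply: l1; lra | apply: l2; lra].

Lemma step (a b u : frame R) : frame_ok b ->
  (forall q, on_frame a q -> in_region u q) ->
  ~ meets (on_frame a) (on_frame u) ->
  meets (on_frame a) (on_frame b) ->
  ~ meets (on_frame b) (on_frame u) ->
  forall q, on_frame b q -> in_region u q.
Proof.
move=> /andP[okb1 okb2] ain nau [[x y] /andP[pa pb]] nbu.
have := ain _ pa; rewrite /in_region /= => /andP[/andP[h1 h2] /andP[h3 h4]].
have pnu : ~~ on_frame u (x, y) by apply/negP => h; apply: nau; exists (x, y); rewrite pa h.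
have Lx : fl u < x.
  rewrite lt_neqAle h1 andbT; apply/eqP => E; move/negP: pnu; apply; apply: onL; lra.
have xR : x < fr u.
  rewrite lt_neqAle h2 andbT; apply/eqP => E; move/negP: pnu; apply; apply: onR; lra.
have By : fb u < y.
  rewrite lt_neqAle h3 andbT; apply/eqP => E; move/negP: pnu; apply; apply: onB; lra.
have yT : y < ft u.
  rewrite lt_neqAle h4 andbT; apply/eqP => E; move/negP: pnu; apply; apply: onT; lra.
have k2 : fr b <= fr u.
  rewrite leNgt; apply/negP => c; case: (leP (ft b) (ft u)) => c1;
  case: (on_frameP pb) => -[e1 e2 e3].
  - W nbu (fr u) (ft b) onT onR.
  - lra.
  - W nbu (fr u) (y) onB onR.
  - W nbu (fr u) (y) onT onR.
  - W nbu (x) (ft u) onL onT.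
  - lra.
  - W nbu (fr u) (y) onB onR.
  - W nbu (fr u) (y) onT onR.
have k1 : fl u <= fl b.
  rewrite leNgt; apply/negP => c; case: (leP (ft b) (ft u)) => c1;
  case: (on_frameP pb) => -[e1 e2 e3].
  - lra.
  - W nbu (fl u) (ft b) onT onL.
  - W nbu (fl u) (y) onB onL.
  - W nbu (fl u) (y) onT onL.
  - lra.
  - W nbu (x) (ft u) onR onT.
  - W nbu (fl u) (y) onB onL.
  - W nbu (fl u) (y) onT onL.
have k4 : ft b <= ft u.
  rewrite leNgt; apply/negP => c; case: (leP (fr b) (fr u)) => c1;
  case: (on_frameP pb) => -[e1 e2 e3].
  - W nbu (x) (ft u) onL onT.
  - W nbu (x) (ft u) onR onT.
  - W nbu (fr b) (ft u) onR onT.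
  - lra.
  - W nbu (x) (ft u) onL onT.
  - W nbu (x) (ft u) onR onT.
  - W nbu (fr u) (y) onB onR.
  - lra.
have k3 : fb u <= fb b.
  rewrite leNgt; apply/negP => c; case: (leP (fr b) (fr u)) => c1;
  case: (on_frameP pb) => -[e1 e2 e3].
  - W nbu (x) (fb u) onL onB.
  - W nbu (x) (fb u) onR onB.
  - lra.
  - W nbu (fr b) (fb u) onR onB.
  - W nbu (x) (fb u) onL onB.
  - W nbu (x) (fb u) onR onB.
  - lra.
  - W nbu (fr u) (y) onT onR.
clear -k1 k2 k3 k4 okb1 okb2 => -[q1 q2] /on_frameP.
by case => -[e1 e2 e3]; rewrite /in_region /=; apply/andP; split; apply/andP; split; lra.
Qed.

End Geo.

Section Graph.
Variables (R : realType) (T : finType) (e : rel T) (F : T -> frame R).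
Hypothesis rep : restricted_rep e F.

Lemma meets_sym (A B : R * R -> bool) : meets A B -> meets B A.
Proof. by case=> p /andP[a b]; exists p; rewrite a b. Qed.

Lemma e_sym x y : e x y -> e y x.
Proof.
case: rep => _ [H _] /H [xy m]; apply/H; split; [by rewrite eq_sym | exact: meets_sym].
Qed.

Lemma far_disjoint u x : x \notin closed_nbhd e u -> ~ meets (on_frame (F x)) (on_frame (F u)).
Proof.
rewrite inE negb_or => /andP[xu eux] m.
case: rep => _ [H _]. have : e x u by apply/H; split.
by move/e_sym; rewrite (negbTE eux).
Qed.

Lemma inside_path u w x :
  (forall q, on_frame (F w) q -> in_region (F u) q) ->
  w \notin closed_nbhd e u ->
  connect (remove_nbhd_rel e u) w x ->
  forall q, on_frame (F x) q -> in_region (F u) q.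
Proof.
move=> Hw wn /connectP [p pth ->] {x}.
elim: p w Hw wn pth => [|y p IH] w Hw wn //= /andP[/and3P[ewy _ yn] pth].
apply: IH pth => //.
case: rep => Fok [H _].
apply: (step (a := F w)) => //; [exact: far_disjoint | | exact: far_disjoint].
by have [_] := (H w y).1 ewy.
Qed.

Lemma far_in_cycle s u : triangle_free e -> induced_cycle e s -> u \in s ->
  exists2 w, w \in s & w \notin closed_nbhd e u.
Proof.
move=> tf [us s3 cyc] uin.
case: (boolP (has (fun w => w \notin closed_nbhd e u) s)) => [/hasP[w ws wn]|/hasPn H];
  first by exists w.
exfalso.
have sub : {subset s <= [:: u; next s u; prev s u]}.
  move=> w ws; have := H w ws; rewrite negbK !inE => /orP[->//|].
  rewrite cyc // => /orP[->|/eqP E]; first by rewrite orbT.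
  by rewrite E (prev_next us); apply/orP; right; apply/orP; right.
have := uniq_leq_size us sub; rewrite /= => s3'.
move: us s3 s3' cyc; case: s {uin H sub} => [|a [|b [|c [|d t]]]] //= us _ _ cyc.
move: us; rewrite !inE negb_or => /and3P[/andP[ab ac] bc _].
have ba : (b == a) = false by rewrite eq_sym (negbTE ab).
have ca : (c == a) = false by rewrite eq_sym (negbTE ac).
have cb : (c == b) = false by rewrite eq_sym (negbTE bc).
apply: (tf a b c).
- by rewrite cyc ?inE ?eqxx ?orbT //= eqxx.
- by rewrite cyc ?inE ?eqxx ?orbT //= ba eqxx.
- by rewrite cyc ?inE ?eqxx ?orbT //= ca cb; apply/orP; right; apply/eqP.
Qed.

Lemma inside_big u x : (forall v : T, ~ full_star_cutset e v) -> triangle_free e ->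
  big_vertex e F u -> x \notin closed_nbhd e u ->
  forall q, on_frame (F x) q -> in_region (F u) q.
Proof.
move=> nc tf [s [cs [us bu]]] xn.
have [w ws wn] := far_in_cycle tf cs us.
have [_ Hin] := bu w ws wn.
apply: (inside_path Hin wn).
apply/negPn/negP => ncon; apply: (nc u); exists w, x; split => //.
Qed.

End Graph.

Theorem lemma3p9 (R : realType) (T : finType) (e : rel T) (F : T -> frame R) :
  restricted_rep e F ->
  connected_graph e ->
  triangle_free e ->
  (forall u : T, ~ full_star_cutset e u) ->
  (forall u v : T, big_vertex e F u -> big_vertex e F v -> u != v -> e u v) /\
  (forall S : {set T}, (forall v, v \in S -> big_vertex e F v) -> (#|S| <= 2)%N).
Proof.
move=> rep _ tf nc.
have part1 : forall u v : T, big_vertex e F u -> big_vertex e F v -> u != v -> e u v.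
  move=> u v bu bv uv; case Euv: (e u v) => //; exfalso.
  have evu : e v u = false by apply/negbTE/negP => /(e_sym rep); rewrite Euv.
  have vn : v \notin closed_nbhd e u by rewrite inE negb_or Euv eq_sym uv.
  have un : u \notin closed_nbhd e v by rewrite inE negb_or evu uv.
  have i1 := inside_big rep nc tf bu vn.
  have i2 := inside_big rep nc tf bv un.
  case: (rep) => Fok [H _].
  have /andP[v1 v2] := Fok v. have /andP[u1 u2] := Fok u.
  have /andP[/andP[a1 a2] /andP[a3 a4]] : in_region (F u) (fl (F v), fb (F v)).
    by apply: i1; apply: onL; lra.
  have /andP[/andP[b1 b2] /andP[b3 b4]] : in_region (F u) (fr (F v), ft (F v)).
    by apply: i1; apply: onR; lra.
  have /andP[/andP[c1 c2] /andP[c3 c4]] : in_region (F v) (fl (F u), fb (F u)).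
    by apply: i2; apply: onL; lra.
  have /andP[/andP[d1 d2] /andP[d3 d4]] : in_region (F v) (fr (F u), ft (F u)).
    by apply: i2; apply: onR; lra.
  simpl in *.
  move: Euv; rewrite (_ : e u v = true) //; apply/H; split => //.
  by exists (fl (F u), fb (F u)); apply/andP; split; apply: onL; lra.
split=> // S HS; rewrite leqNgt; apply/negP => S3.
have U := enum_uniq (mem S).
move: S3 U; rewrite cardE.
have mS x : x \in enum (mem S) -> x \in S by rewrite mem_enum.
case: (enum (mem S)) mS => [|a [|b [|c t]]] //= mS _.
rewrite !inE !negb_or => /and4P[/and3P[ab ac _] /andP[bc _] _ _].
have ha : big_vertex e F a by apply/HS/mS; rewrite inE eqxx.
have hb : big_vertex e F b by apply/HS/mS; rewrite !inE eqxx orbT.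
have hc : big_vertex e F c by apply/HS/mS; rewrite !inE eqxx !orbT.
by apply: (tf a b c); apply: part1.
Qed.
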